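(* Let $\psi=\Psi(\tau^*,R^* )$ for some generic $M$-layer model $(\tau^*,R^* )$, and let $(\sigma,\alpha)$ be the data of an $M$-layer model $(\tau,R)\in U_\psi\times\mathcal{R}_\psi$. Let $\sigma_\psi=(\sigma_{\psi(k^0)},\sigma_{\psi(k^1)},\ldots,\sigma_{\psi(k^M)})\in\mathbb{R}^{M+1}$. Then $$\tau=\sigma_\psi J_M,\qquad R_0=\alpha_1,\qquad R_n=\frac{\alpha_{\psi(k^n)}}{\prod_{j=0}^{n-1}(1-R_j^2)}\quad(1\le n\le M).$$
   Context: Primary vectors: $k^n\in\mathbb{Z}^{M+1}$ has $k^n_j=1$ for $j\le n$ and $0$ otherwise ($0\le n\le M$). $J_M$ is the $(M+1)\times(M+1)$ matrix with $1$ on the diagonal, $-1$ on the superdiagonal and $0$ elsewhere (the inverse of the upper-triangular all-ones matrix $K_M$ whose columns are $(k^0)^T,\ldots,(k^M)^T$); $\tau,\sigma_\psi$ are row vectors. An $M$-layer model ($M\ge1$) is $(\tau,R)$ with $\tau\in\mathbb{R}^{M+1}_{>0}$, $R\in(-1,1)^{M+1}$. $\mathfrak{L}_M\subset\mathbb{Z}^{M+1}_{\geq0}$: all $k$ with $k_0=1$ and $k_n>0\Rightarrow k_{n-1}>0$; $\mathfrak{L}^\tau_M=\{k\in\mathfrak{L}_M:\langle k,\tau\rangle\le\langle\mathbb{1},\tau\rangle\}$. Amplitude polynomial: $\mathbb{1}=(1,\ldots,1)$; inequalities and $\min$ entrywise; $x^k=\prod_n x_n^{k_n}$, $\binom{k}{b}=\prod_n\binom{k_n}{b_n}$;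 $\tilde k=(k_1,\ldots,k_M,0)$, $u=\min\{\mathbb{1},\tilde k\}$, $V(k)=\{b:u\le b\le\min\{k,\tilde k\}\}$, $a(x,k)=\sum_{b\in V(k)}\binom{k}{b}\binom{\tilde k-u}{b-u}(-x)^{\tilde k-b}x^{k-b}\prod_n(1-x_n^2)^{b_n}$. Data: normal form $\sum_{n=1}^d\alpha_n\delta(t-\sigma_n)$ ($\alpha_n\ne0$, $\sigma_1<\cdots<\sigma_d$) of $D^{(\tau,R)}(t)=\sum_{k\in\mathfrak{L}^\tau_M}a(R,k)\delta(t-\langle k,\tau\rangle)$. Enumeration function $\Psi(\tau,R):\mathfrak{L}^\tau_M\to\{0,\ldots,d\}$: $k\mapsto0$ if $\langle k,\tau\rangle\notin\{\sigma_n\}$, else $k\mapsto1+\#\{n:\sigma_n<\langle k,\tau\rangle\}$. Generic: $\Psi(\tau,R)$ injective and never $0$. $\mathcal{R}_\psi=\{R'\in(-1,1)^{M+1}:a(R',k)\ne0\ \forall k\in\mathfrak{L}^{\tau^*}_M\}$; $U_\psi=\{\tau'\in\mathbb{R}^{M+1}_{>0}:\Psi(\tau',R')=\psi\ \forall R'\in\mathcal{R}_\psi\}$ (equality including domains). *)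

(* Defs.v *)
From Stdlib Require Import Reals Lra Lia Arith List.
Import ListNotations.
Open Scope R_scope.

(* Conventions:
   - real vectors in R^{M+1} (tau, R, x, sigma_psi) are functions nat -> R,
     only the entries 0..M are relevant;
   - integer vectors k in Z_{>=0}^{M+1} are lists of nat of length M+1,
     k_n = nth n k 0;
   - the data (sigma, alpha) of a model is indexed by 1..d. *)

Definition sumR (l : list R) : R := fold_right Rplus 0 l.
Definition prodR (l : list R) : R := fold_right Rmult 1 l.

Definition kc (k : list nat) (n : nat) : nat := nth n k 0%nat.

Definition dotk (M : nat) (k : list nat) (tau : nat -> R) : R :=
  sumR (map (fun n => INR (kc k n) * tau n) (seq 0 (S M))).

Definition sum1 (M : nat) (tau : nat -> R) : R :=
  sumR (map tau (seq 0 (S M))).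

Definition inL (M : nat) (k : list nat) : Prop :=
  length k = S M /\ kc k 0 = 1%nat /\
  (forall n, (1 <= n <= M)%nat -> (0 < kc k n)%nat -> (0 < kc k (n - 1))%nat).

Definition inLtau (M : nat) (tau : nat -> R) (k : list nat) : Prop :=
  inL M k /\ dotk M k tau <= sum1 M tau.

Definition is_model (M : nat) (tau Rv : nat -> R) : Prop :=
  forall n, (n <= M)%nat -> 0 < tau n /\ -1 < Rv n < 1.

Definition ktil (M : nat) (k : list nat) (n : nat) : nat :=
  if (n <? M)%nat then kc k (S n) else 0%nat.
Definition ulo (M : nat) (k : list nat) (n : nat) : nat := Nat.min 1 (ktil M k n).
Definition uhi (M : nat) (k : list nat) (n : nat) : nat := Nat.min (kc k n) (ktil M k n).

Fixpoint box (lo hi : list nat) : list (list nat) :=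
  match lo, hi with
  | l :: lo', h :: hi' =>
      flat_map (fun i => map (cons i) (box lo' hi')) (seq l (S h - l))
  | _, _ => [nil]
  end.

Definition Vset (M : nat) (k : list nat) : list (list nat) :=
  box (map (ulo M k) (seq 0 (S M))) (map (uhi M k) (seq 0 (S M))).

(* the summand of a(x,k) for a given b; C is the (real) binomial coefficient of
   Stdlib's Binomial, only used with arguments 0 <= p <= n here *)
Definition aterm (M : nat) (x : nat -> R) (k b : list nat) : R :=
  prodR (map (fun n =>
    C (kc k n) (kc b n)
    * C (ktil M k n - ulo M k n) (kc b n - ulo M k n)
    * (- x n) ^ (ktil M k n - kc b n)
    * (x n) ^ (kc k n - kc b n)
    * (1 - (x n) ^ 2) ^ (kc b n)) (seq 0 (S M))).

Definition amp (M : nat) (x : nat -> R) (k : list nat) : R :=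
  sumR (map (aterm M x k) (Vset M k)).

(* mass of the normal form sum_{n=1}^d alpha_n delta(t - sigma_n) at t *)
Definition nf_mass (d : nat) (sigma alpha : nat -> R) (t : R) : R :=
  sumR (map (fun n => if Req_EM_T (sigma n) t then alpha n else 0) (seq 1 d)).

(* (d, sigma, alpha) is the data (normal form) of D^{(tau,R)}:
   sigma_1 < ... < sigma_d, alpha_n <> 0, and for every t the total amplitude of
   D^{(tau,R)} at t (sum of a(R,k) over the finitely many k in L_M^tau with
   <k,tau> = t, enumerated without repetition by L) equals the mass of the
   normal form at t. *)
Definition is_data (M : nat) (tau Rv : nat -> R) (d : nat) (sigma alpha : nat -> R)
  : Prop :=
  (forall n, (1 <= n)%nat -> (n < d)%nat -> sigma n < sigma (S n)) /\
  (forall n, (1 <= n <= d)%nat -> alpha n <> 0) /\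
  (forall (t : R) (L : list (list nat)),
     NoDup L ->
     (forall k, In k L <-> (inLtau M tau k /\ dotk M k tau = t)) ->
     sumR (map (amp M Rv) L) = nf_mass d sigma alpha t).

Definition Psi_val (d : nat) (sigma : nat -> R) (t : R) : nat :=
  if existsb (fun n => if Req_EM_T (sigma n) t then true else false) (seq 1 d)
  then S (length (filter (fun n => if Rlt_dec (sigma n) t then true else false)
                         (seq 1 d)))
  else 0%nat.

(* Psi(tau', R') = psi, including domains: psi has domain L_M^{tau0};
   phrased for the (unique) data of (tau', R') *)
Definition Psi_eq (M : nat) (tau' Rv' : nat -> R) (tau0 : nat -> R)
  (psi : list nat -> nat) : Prop :=
  forall d sigma alpha, is_data M tau' Rv' d sigma alpha ->
    (forall k, inLtau M tau' k <-> inLtau M tau0 k) /\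
    (forall k, inLtau M tau' k -> Psi_val d sigma (dotk M k tau') = psi k).

Definition in_Rpsi (M : nat) (tau0 : nat -> R) (Rv' : nat -> R) : Prop :=
  (forall n, (n <= M)%nat -> -1 < Rv' n < 1) /\
  (forall k, inLtau M tau0 k -> amp M Rv' k <> 0).

Definition in_Upsi (M : nat) (tau0 : nat -> R) (psi : list nat -> nat)
  (tau' : nat -> R) : Prop :=
  (forall n, (n <= M)%nat -> 0 < tau' n) /\
  (forall Rv', in_Rpsi M tau0 Rv' -> Psi_eq M tau' Rv' tau0 psi).

Definition primary (M n : nat) : list nat :=
  map (fun j => if (j <=? n)%nat then 1%nat else 0%nat) (seq 0 (S M)).

Definition Jmat (i j : nat) : R :=
  if (i =? j)%nat then 1 else if (S i =? j)%nat then -1 else 0.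
Definition vecmat (M : nat) (v : nat -> R) (A : nat -> nat -> R) (j : nat) : R :=
  sumR (map (fun i => v i * A i j) (seq 0 (S M))).

(* Main.v *)
Require Import Defs.
From Stdlib Require Import Reals List Lra Lia Arith.
Import ListNotations.
Open Scope R_scope.

Lemma nth_map_seq0 (f : nat -> nat) (M j : nat) : (j < S M)%nat ->
  nth j (map f (seq 0 (S M))) 0%nat = f j.
Proof.
  intro H. rewrite nth_indep with (d' := f 0%nat) by (rewrite length_map, length_seq; lia).
  rewrite map_nth, seq_nth by lia. reflexivity.
Qed.

Lemma sumR_minus {A} (f g : A -> R) l :
  sumR (map (fun x => f x - g x) l) = sumR (map f l) - sumR (map g l).
Proof. induction l; unfold sumR in *; simpl; [lra| rewrite IHl; lra]. Qed.

Lemma sumR_ext {A} (f g : A -> R) l :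
  (forall x, In x l -> f x = g x) -> sumR (map f l) = sumR (map g l).
Proof. intro H; f_equal; apply map_ext_in; auto. Qed.

Lemma sumR_le {A} (f g : A -> R) l :
  (forall x, In x l -> f x <= g x) -> sumR (map f l) <= sumR (map g l).
Proof.
  induction l; unfold sumR in *; simpl; intros H; [lra|].
  specialize (IHl (fun x Hx => H x (or_intror Hx))).
  specialize (H a (or_introl eq_refl)). lra.
Qed.

Lemma sumR_nonneg {A} (f : A -> R) l :
  (forall x, In x l -> 0 <= f x) -> 0 <= sumR (map f l).
Proof.
  induction l; unfold sumR in *; simpl; intros H; [lra|].
  specialize (IHl (fun x Hx => H x (or_intror Hx))).
  specialize (H a (or_introl eq_refl)). lra.
Qed.

Lemma sum_delta_notin (f : nat -> R) m l : ~ In m l ->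
  sumR (map (fun j => if Nat.eqb j m then f j else 0) l) = 0.
Proof.
  induction l; unfold sumR in *; simpl; intros H; [lra|].
  destruct (Nat.eqb_spec a m); [exfalso; apply H; auto|].
  rewrite IHl by tauto; lra.
Qed.

Lemma sum_delta (f : nat -> R) m l : NoDup l -> In m l ->
  sumR (map (fun j => if Nat.eqb j m then f j else 0) l) = f m.
Proof.
  induction l; intros Hn Hi; [contradiction|]. inversion Hn; subst.
  change (sumR (map (fun j => if Nat.eqb j m then f j else 0) (a :: l)))
    with ((if Nat.eqb a m then f a else 0) + sumR (map (fun j => if Nat.eqb j m then f j else 0) l)).
  destruct (Nat.eqb_spec a m).
  - subst. rewrite sum_delta_notin by auto. lra.
  - destruct Hi as [Hi|Hi]; [congruence|]. rewrite IHl by auto; lra.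
Qed.

Lemma prodR_app l1 l2 : prodR (l1 ++ l2) = prodR l1 * prodR l2.
Proof. induction l1; unfold prodR in *; simpl; [lra| rewrite IHl1; lra]. Qed.

Lemma prodR_pos l : (forall x, In x l -> 0 < x) -> 0 < prodR l.
Proof.
  induction l; unfold prodR in *; simpl; intros H; [lra|].
  apply Rmult_lt_0_compat; auto.
Qed.

Lemma prodR_ext {A} (f g : A -> R) l :
  (forall x, In x l -> f x = g x) -> prodR (map f l) = prodR (map g l).
Proof. intro H; f_equal; apply map_ext_in; auto. Qed.

Lemma prodR_one {A} (l : list A) : prodR (map (fun _ => 1) l) = 1.
Proof. induction l; unfold prodR in *; simpl; [lra| rewrite IHl; lra]. Qed.

Lemma box_diag l : box l l = [l].
Proof.
  induction l as [|a l IH]; [reflexivity|].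
  cbn [box]. replace (S a - a)%nat with 1%nat by lia. simpl. rewrite IH. reflexivity.
Qed.

Lemma kc_primary M n j : (j <= M)%nat ->
  kc (primary M n) j = if (j <=? n)%nat then 1%nat else 0%nat.
Proof. intro H. unfold kc, primary. rewrite nth_map_seq0 by lia. reflexivity. Qed.

Lemma sumR_single {A} (f : A -> R) a : sumR (map f [a]) = f a.
Proof. unfold sumR; simpl; ring. Qed.

Lemma amp_primary M n x : (n <= M)%nat ->
  amp M x (primary M n) = x n * prodR (map (fun j => 1 - x j ^ 2) (seq 0 n)).
Proof.
  intro Hn. set (k := primary M n).
  assert (Ht : forall j, (j <= M)%nat -> ktil M k j = if (j <? n)%nat then 1%nat else 0%nat).
  { intros j Hj. unfold ktil. destruct (Nat.ltb_spec j M).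
    - unfold k; rewrite kc_primary by lia.
      destruct (Nat.leb_spec (S j) n), (Nat.ltb_spec j n); lia.
    - destruct (Nat.ltb_spec j n); lia. }
  assert (Hu : forall j, (j <= M)%nat -> ulo M k j = if (j <? n)%nat then 1%nat else 0%nat).
  { intros j Hj. unfold ulo. rewrite Ht by lia. destruct (j <? n)%nat; reflexivity. }
  assert (Hh : forall j, (j <= M)%nat -> uhi M k j = if (j <? n)%nat then 1%nat else 0%nat).
  { intros j Hj. unfold uhi. rewrite Ht by lia. unfold k; rewrite kc_primary by lia.
    destruct (Nat.leb_spec j n), (Nat.ltb_spec j n); simpl; try reflexivity; lia. }
  unfold amp, Vset.
  assert (E: map (uhi M k) (seq 0 (S M)) = map (ulo M k) (seq 0 (S M))).
  { apply map_ext_in. intros j Hj. apply in_seq in Hj. rewrite Hu, Hh by lia. reflexivity. }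
  rewrite E, box_diag, sumR_single.
  unfold aterm. set (b := map (ulo M k) (seq 0 (S M))).
  rewrite (prodR_ext _ (fun j => if (j <? n)%nat then 1 - x j ^ 2 else if (j =? n)%nat then x j else 1)).
  2:{ intros j Hj. apply in_seq in Hj.
      assert (Hb : kc b j = if (j <? n)%nat then 1%nat else 0%nat).
      { unfold b, kc. rewrite nth_map_seq0 by lia. apply Hu; lia. }
      rewrite Hb, Ht, Hu by lia. unfold k; rewrite kc_primary by lia.
      destruct (Nat.ltb_spec j n).
      - destruct (Nat.leb_spec j n); [|lia]. simpl. unfold C; simpl. field.
      - destruct (Nat.eqb_spec j n); destruct (Nat.leb_spec j n); try lia; simpl;
          unfold C; simpl; field. }
  replace (S M) with (n + S (M - n))%nat by lia.
  rewrite seq_app. simpl (seq (0 + n) _). rewrite map_app, prodR_app.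
  rewrite (prodR_ext _ (fun j => 1 - x j ^ 2) (seq 0 n)).
  2:{ intros j Hj. apply in_seq in Hj. destruct (Nat.ltb_spec j n); [reflexivity| lia]. }
  cbn [map]. 
  change (prodR (?a :: ?l)) with (a * prodR l).
  rewrite (prodR_ext _ (fun _ => 1) (seq (S n) (M - n))).
  2:{ intros j Hj. apply in_seq in Hj. destruct (Nat.ltb_spec j n); [lia|].
      destruct (Nat.eqb_spec j n); [lia| reflexivity]. }
  rewrite prodR_one. rewrite Nat.ltb_irrefl, Nat.eqb_refl. ring.
Qed.

Lemma sig_mono d (sigma : nat -> R) :
  (forall n, (1 <= n)%nat -> (n < d)%nat -> sigma n < sigma (S n)) ->
  forall n m, (1 <= n)%nat -> (n < m)%nat -> (m <= d)%nat -> sigma n < sigma m.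
Proof.
  intros H n m; induction m; intros H1 H2 H3; [lia|].
  destruct (Nat.eq_dec n m).
  - subst. apply H; lia.
  - apply Rlt_trans with (sigma m); [apply IHm; lia| apply H; lia].
Qed.

Lemma nf_mass_at d sigma alpha n0
  (Hm : forall n m, (1 <= n)%nat -> (n < m)%nat -> (m <= d)%nat -> sigma n < sigma m) :
  (1 <= n0 <= d)%nat -> nf_mass d sigma alpha (sigma n0) = alpha n0.
Proof.
  intros Hn. unfold nf_mass.
  rewrite (sumR_ext _ (fun j => if Nat.eqb j n0 then alpha j else 0)).
  - apply sum_delta; [apply seq_NoDup| apply in_seq; lia].
  - intros j Hj. apply in_seq in Hj.
    destruct (Req_EM_T (sigma j) (sigma n0)) as [E|E]; destruct (Nat.eqb_spec j n0);
      subst; try reflexivity.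
    + exfalso. destruct (lt_dec j n0).
      * assert (sigma j < sigma n0) by (apply Hm; lia). lra.
      * assert (sigma n0 < sigma j) by (apply Hm; lia). lra.
    + exfalso; apply E; reflexivity.
Qed.

Lemma filter_all_true {A} (f : A -> bool) l : (forall x, In x l -> f x = true) -> filter f l = l.
Proof.
  induction l; simpl; intros H; [reflexivity|]. rewrite H by auto. rewrite IHl by auto. reflexivity.
Qed.

Lemma filter_all_false {A} (f : A -> bool) l : (forall x, In x l -> f x = false) -> filter f l = [].
Proof.
  induction l; simpl; intros H; [reflexivity|]. rewrite H by auto. apply IHl; auto.
Qed.

Lemma Psi_val_spec d sigma t
  (Hm : forall n m, (1 <= n)%nat -> (n < m)%nat -> (m <= d)%nat -> sigma n < sigma m) :
  Psi_val d sigma t <> 0%nat ->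
  exists n0, (1 <= n0 <= d)%nat /\ sigma n0 = t /\ Psi_val d sigma t = n0.
Proof.
  intros Hne. unfold Psi_val in *.
  destruct (existsb _ (seq 1 d)) eqn:Ee; [|contradiction].
  apply existsb_exists in Ee. destruct Ee as [n0 [Hin Hs]]. apply in_seq in Hin.
  destruct (Req_EM_T (sigma n0) t) as [Es|]; [|discriminate].
  exists n0. split; [lia|]. split; [auto|].
  replace d with ((n0 - 1) + S (d - n0))%nat by lia.
  rewrite seq_app, filter_app, length_app.
  rewrite filter_all_true, filter_all_false, length_seq; [simpl; lia| |].
  - intros j Hj. apply in_seq in Hj.
    destruct (Rlt_dec (sigma j) t) as [Hl|Hl]; [|reflexivity]. exfalso.
    destruct (Nat.eq_dec j n0); [subst; lra|].
    assert (sigma n0 < sigma j) by (apply Hm; lia). lra.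
  - intros j Hj. apply in_seq in Hj.
    destruct (Rlt_dec (sigma j) t) as [Hl|Hl]; [reflexivity|]. exfalso.
    assert (sigma j < sigma n0) by (apply Hm; lia). lra.
Qed.

Lemma dotk_ge M k tau : inL M k -> (forall n, (n <= M)%nat -> 0 < tau n) ->
  tau 0%nat <= dotk M k tau.
Proof.
  intros [_ [H0 _]] Ht.
  assert (E: dotk M k tau = INR (kc k 0) * tau 0%nat
     + sumR (map (fun n => INR (kc k n) * tau n) (seq 1 M))) by reflexivity.
  rewrite E, H0. simpl INR.
  assert (0 <= sumR (map (fun n => INR (kc k n) * tau n) (seq 1 M))).
  { apply sumR_nonneg. intros j Hj. apply in_seq in Hj.
    apply Rmult_le_pos; [apply pos_INR| left; apply Ht; lia]. }
  lra.
Qed.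

Lemma primary_inL M n tau : (n <= M)%nat -> (forall j, (j <= M)%nat -> 0 < tau j) ->
  inLtau M tau (primary M n).
Proof.
  intros Hn Ht. split; [split; [|split]|].
  - unfold primary. rewrite length_map, length_seq. reflexivity.
  - rewrite kc_primary by lia. reflexivity.
  - intros m Hm Hp. rewrite kc_primary in Hp by lia. rewrite kc_primary by lia.
    destruct (Nat.leb_spec m n); [|simpl in Hp; lia].
    destruct (Nat.leb_spec (m-1) n); lia.
  - unfold dotk, sum1. apply sumR_le. intros j Hj. apply in_seq in Hj.
    rewrite kc_primary by lia. specialize (Ht j ltac:(lia)).
    destruct (j <=? n)%nat; simpl; lra.
Qed.

Lemma dotk_primary M i tau : (i <= M)%nat ->
  dotk M (primary M i) tau = sumR (map (fun j => if (j <=? i)%nat then tau j else 0) (seq 0 (S M))).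
Proof.
  intros Hi. unfold dotk. apply sumR_ext. intros j Hj. apply in_seq in Hj.
  rewrite kc_primary by lia. destruct (j <=? i)%nat; simpl; ring.
Qed.

Lemma dotk_primary0 M tau : dotk M (primary M 0) tau = tau 0%nat.
Proof.
  rewrite dotk_primary by lia.
  rewrite (sumR_ext _ (fun j => if Nat.eqb j 0 then tau j else 0)).
  - apply sum_delta; [apply seq_NoDup| apply in_seq; lia].
  - intros j _. destruct j; reflexivity.
Qed.

Lemma dotk_primaryS M i tau : (S i <= M)%nat ->
  dotk M (primary M (S i)) tau - dotk M (primary M i) tau = tau (S i).
Proof.
  intros Hi. rewrite !dotk_primary by lia. rewrite <- sumR_minus.
  rewrite (sumR_ext _ (fun j => if Nat.eqb j (S i) then tau j else 0)).
  - apply sum_delta; [apply seq_NoDup| apply in_seq; lia].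
  - intros j _. destruct (Nat.leb_spec j (S i)), (Nat.leb_spec j i), (Nat.eqb_spec j (S i));
      try lia; ring.
Qed.

Lemma vecmat_J M v j : (j <= M)%nat ->
  vecmat M v Jmat j = v j - (match j with 0%nat => 0 | S j' => v j' end).
Proof.
  intros Hj. unfold vecmat, Jmat.
  rewrite (sumR_ext _ (fun i => (if Nat.eqb i j then v i else 0) - (if Nat.eqb (S i) j then v i else 0))).
  2:{ intros i _. destruct (Nat.eqb_spec i j), (Nat.eqb_spec (S i) j); subst; try lia; ring. }
  rewrite sumR_minus, sum_delta; [| apply seq_NoDup| apply in_seq; lia].
  destruct j as [|j'].
  - rewrite (sumR_ext _ (fun i => if Nat.eqb i (S M) then v i else 0)).
    + rewrite sum_delta_notin; [ring|]. rewrite in_seq. lia.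
    + intros i Hi. apply in_seq in Hi. destruct (Nat.eqb_spec i (S M)); [lia|]. reflexivity.
  - rewrite (sumR_ext _ (fun i => if Nat.eqb i j' then v i else 0)).
    + rewrite sum_delta; [ring| apply seq_NoDup| apply in_seq; lia].
    + intros i _. reflexivity.
Qed.

Theorem theorem4p4 (M : nat) (hM : (1 <= M)%nat)
  (taus Rs : nat -> R) (hmods : is_model M taus Rs)
  (ds : nat) (sigmas alphas : nat -> R)
  (hdatas : is_data M taus Rs ds sigmas alphas)
  (psi : list nat -> nat)
  (hpsi : forall k, inLtau M taus k -> psi k = Psi_val ds sigmas (dotk M k taus))
  (hgen_nz : forall k, inLtau M taus k -> psi k <> 0%nat)
  (hgen_inj : forall k k', inLtau M taus k -> inLtau M taus k' ->
                psi k = psi k' -> k = k')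
  (tau Rv : nat -> R) (hU : in_Upsi M taus psi tau) (hR : in_Rpsi M taus Rv)
  (d : nat) (sigma alpha : nat -> R) (hdata : is_data M tau Rv d sigma alpha) :
  let sigma_psi := fun i => sigma (psi (primary M i)) in
  (forall j, (j <= M)%nat -> tau j = vecmat M sigma_psi Jmat j) /\
  Rv 0%nat = alpha 1%nat /\
  (forall n, (1 <= n <= M)%nat ->
     Rv n = alpha (psi (primary M n)) /
           prodR (map (fun j => 1 - (Rv j) ^ 2) (seq 0 n))).
Proof.
  intros sigma_psi.
  destruct hU as [htau hUp].
  destruct (hUp Rv hR d sigma alpha hdata) as [hdom hpsival].
  destruct hdata as [hmono1 [hanz hmass]].
  pose proof (sig_mono d sigma hmono1) as hmono.
  assert (hprim : forall n, (n <= M)%nat -> inLtau M tau (primary M n))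
    by (intros; apply primary_inL; auto).
  assert (hC : forall k, inLtau M tau k ->
     exists n0, (1 <= n0 <= d)%nat /\ sigma n0 = dotk M k tau /\ psi k = n0).
  { intros k hk. rewrite <- (hpsival k hk). apply Psi_val_spec; auto.
    rewrite hpsival by auto. apply hgen_nz. apply hdom; auto. }
  assert (hD : forall n, (n <= M)%nat -> amp M Rv (primary M n) = alpha (psi (primary M n))).
  { intros n Hn. destruct (hC _ (hprim n Hn)) as [n0 [Hn0 [Hs Hp]]].
    assert (HL := hmass (dotk M (primary M n) tau) [primary M n]).
    rewrite Hp. rewrite <- (nf_mass_at d sigma alpha n0 hmono Hn0), Hs.
    rewrite <- HL.
    - rewrite sumR_single. reflexivity.
    - constructor; [intro H; inversion H| constructor].
    - intros k. split.
      + intros [<-|[]]. split; [apply hprim; auto| reflexivity].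
      + intros [hk hdk]. left. apply hgen_inj; try (apply hdom; auto).
        rewrite <- (hpsival k hk), <- (hpsival _ (hprim n Hn)), hdk. reflexivity. }
  assert (hsig : forall i, (i <= M)%nat -> sigma_psi i = dotk M (primary M i) tau).
  { intros i Hi. unfold sigma_psi. destruct (hC _ (hprim i Hi)) as [n0 [_ [Hs Hp]]].
    rewrite Hp. exact Hs. }
  split; [|split].
  - intros j Hj. rewrite vecmat_J by auto. destruct j.
    + rewrite hsig by lia. rewrite dotk_primary0. ring.
    + rewrite !hsig by lia. rewrite <- (dotk_primaryS M j tau) by lia. reflexivity.
  - pose proof (hD 0%nat ltac:(lia)) as H0. rewrite amp_primary in H0 by lia.
    simpl in H0.
    destruct (hC _ (hprim 0%nat ltac:(lia))) as [n0 [Hn0 [Hs Hp]]].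
    assert (E1 : n0 = 1%nat).
    { destruct (Nat.eq_dec n0 1) as [|Hne]; [auto|exfalso].
      assert (Hlt : sigma 1%nat < sigma n0) by (apply hmono; lia).
      rewrite Hs, dotk_primary0 in Hlt.
      assert (HL := hmass (sigma 1%nat) [] (NoDup_nil _)).
      apply (hanz 1%nat); [lia|].
      rewrite <- (nf_mass_at d sigma alpha 1 hmono ltac:(lia)). rewrite <- HL; [reflexivity|].
      intros k; split; [intros []|]. intros [hk hdk].
      pose proof (dotk_ge M k tau (proj1 hk) htau). lra. }
    rewrite E1 in Hp. rewrite Hp in H0. unfold prodR in H0; simpl in H0. lra.
  - intros n Hn. pose proof (hD n ltac:(lia)) as H. rewrite amp_primary in H by lia.
    assert (Hp : 0 < prodR (map (fun j => 1 - Rv j ^ 2) (seq 0 n))).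
    { apply prodR_pos. intros y Hy. apply in_map_iff in Hy. destruct Hy as [j [<- Hj]].
      apply in_seq in Hj. destruct hR as [hR1 _]. destruct (hR1 j ltac:(lia)). simpl; nra. }
    rewrite <- H. field. lra.
Qed.
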